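(* Let $k,r\in\mathbb{N}$ and let $M_1,\dots,M_k$ be matchings (in a common undirected graph) with $\Delta\big(\bigcup_{i\in[k]}M_i\big)\leq r$. Suppose $e(M_i)>2(r^3+r)^2\ln k$ for all $i\in[k]$. Then there exists a matching $H\subseteq\bigcup_{i\in[k]}M_i$ with $|E(H)\cap M_i|\geq e(M_i)/(r^2+1)$ for all $i\in[k]$.
   Context: A matching is a set of edges no two of which share a vertex; $\Delta$ denotes maximum degree of the undirected graph formed by the union of the edge sets. *)

(* Defs.v *)
From mathcomp Require Import all_boot all_order all_algebra.
From mathcomp Require Import all_classical all_reals all_analysis.
Set Implicit Arguments. Unset Strict Implicit. Unset Printing Implicit Defensive.

(* Simple undirected graphs on a finite vertex type T: an edge is a
   2-element vertex set, an edge set is a {set {set T}}. *)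

Definition is_edge_set (T : finType) (E : {set {set T}}) : Prop :=
  forall e, e \in E -> #|e| = 2%N.

Definition is_matching (T : finType) (M : {set {set T}}) : Prop :=
  is_edge_set M /\
  forall e f, e \in M -> f \in M -> e != f -> [disjoint e & f].

Definition deg (T : finType) (E : {set {set T}}) (v : T) : nat :=
  #|[set e in E | v \in e]|.

Definition max_deg_le (T : finType) (E : {set {set T}}) (r : nat) : Prop :=
  forall v, (deg E v <= r)%N.

(* Main.v *)
Require Import Defs.
From mathcomp Require Import all_boot all_order all_algebra.
From mathcomp Require Import all_classical all_reals all_analysis.
From mathcomp Require Import ring lra.
Import Order.TTheory GRing.Theory Num.Theory numFieldNormedType.Exports.
Local Open Scope ring_scope.
Lemma expR_ge2 (R : realType) (x : R) : 0 <= x -> 1 + x + x ^+ 2 / 2 <= expR x.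
Proof.
move=> x_ge0; rewrite /expR.
pose f (i : nat) : R := exp_coeff x i *+ (i < 3)%N.
have F m : (2 < m)%N -> \sum_(0 <= i < m) f i = 1 + x + x ^+ 2 / 2.
  move=> m3.
  rewrite (@big_cat_nat _ _ _ 3)//=.
  have -> : \sum_(3 <= i < m) f i = 0.
    rewrite big_nat_cond big1 // => i /andP[/andP[ni _] _].
    by rewrite /f ltnNge ni mulr0n.
  rewrite addr0.
  rewrite !big_nat_recl // big_geq // /f /exp_coeff /=.
  rewrite !mulr1n expr0 expr1 !divr1 addr0 addrA; congr (_ + _ / _).
rewrite [leLHS](_ : _ = limn (series f)); last first.
  by apply/esym/lim_near_cst => //; near=> k; apply: F; near: k.
apply: ler_lim.
- apply: is_cvg_near_cst; near=> k; apply: F; near: k; exact: nbhs_infty_gt.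
- exact: is_cvg_series_exp_coeff.
near=> k; apply: ler_sum => i _; rewrite /f.
case: (i < 3)%N; rewrite ?mulr1n ?mulr0n //.
by rewrite /exp_coeff /= divr_ge0 // exprn_ge0.
Unshelve. all: by end_near. Qed.

Lemma expN_le (R : realType) (d : R) : 0 <= d -> expR (- d) <= 1 - d + d ^+ 2 / 2.
Proof.
move=> d0; have P := @expR_ge2 _ d d0.
have Pp : 0 < 1 + d + d ^+ 2 / 2 by have := sqr_ge0 d; lra.
rewrite expRN -(ler_pM2l (expR_gt0 d)) mulfV ?gt_eqF ?expR_gt0 //.
have Q0 : 0 <= 1 - d + d ^+ 2 / 2.
  have := sqr_ge0 (d - 1); rewrite !expr2; nra.
apply: le_trans (ler_wpM2r Q0 P).
have : 0 <= d ^+ 2 * d ^+ 2 by rewrite mulr_ge0 // sqr_ge0.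
rewrite !expr2; nra.
Qed.

Lemma real_bound (R : realType) (rho : R) (m : nat) : 1 <= rho ->
  expR (m%:R * (rho + 1)^-1 * (rho + 1)^-1) *
    (1 + (expR (- (rho + 1)^-1) - 1) / rho) ^+ m
  <= expR (- (m%:R / (2 * rho * (rho + 1) ^+ 2))).
Proof.
move=> r1; set d := (rho + 1)^-1; set q := expR (- d).
have d0 : 0 < d by rewrite invr_gt0; lra.
have rd : rho * d = 1 - d by rewrite /d; field; lra.
have hq := @expN_le _ d (ltW d0); rewrite -/q in hq.
have q0 : 0 < q by apply: expR_gt0.
set y := (1 - q) / rho.
have -> : 1 + (q - 1) / rho = 1 - y by rewrite /y; field; lra.
have y1 : 0 <= 1 - y.
  rewrite subr_ge0 /y ler_pdivrMr; lra.
have : (1 - y) ^+ m <= expR (- y) ^+ m.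
  apply: lerXn2r; rewrite ?nnegrE ?expR_ge0 //.
  by have := expR_ge1Dx (- y); lra.
move=> hm.
apply: (le_trans (ler_wpM2l (expR_ge0 _) hm)).
rewrite -expRM_natl -expRD ler_expR.
have hy : d ^+ 2 + d ^+ 2 / (2 * rho) <= y.
  rewrite /y ler_pdivlMr; last lra.
  have -> : (d ^+ 2 + d ^+ 2 / (2 * rho)) * rho = rho * d * d + d ^+ 2 / 2.
    by field; lra.
  rewrite rd; rewrite !expr2 in hq *; lra.
have -> : m%:R / (2 * rho * (rho + 1) ^+ 2) = m%:R * (d ^+ 2 / (2 * rho)).
  by rewrite /d; field; lra.
have m0 : 0 <= (m%:R : R) by [].
rewrite !expr2 in hy *; nra.
Qed.

Section Indep.
Variables (R : realType) (T J : finType).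
Local Notation Om := {ffun T -> J}.

Definition mixf (A : {set T}) (f g : Om) : Om :=
  [ffun x => if x \in A then f x else g x].

Lemma mix_sum (A : {set T}) (F G : Om -> R) :
  (forall f g : Om, {in A, f =1 g} -> F f = F g) ->
  (forall f g : Om, {in ~: A, f =1 g} -> G f = G g) ->
  #|Om|%:R * \sum_f F f * G f = (\sum_f F f) * (\sum_f G f).
Proof.
move=> HF HG.
transitivity (\sum_(f : Om) \sum_(g : Om) F f * G g); last first.
  by rewrite big_distrl; apply: eq_bigr => f _; rewrite big_distrr.
transitivity (\sum_(f : Om) \sum_(g : Om) F (mixf A f g) * G (mixf A f g)); last first.
  apply: eq_bigr => f _; apply: eq_bigr => g _; congr (_ * _).
    by apply: HF => x xA; rewrite ffunE xA.
  by apply: HG => x; rewrite inE => /negbTE xA; rewrite ffunE xA.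
rewrite pair_bigA /=.
pose sg (p : Om * Om) := (mixf A p.1 p.2, mixf A p.2 p.1).
have sgK : involutive sg.
  move=> [f g]; rewrite /sg /=; congr (_, _); apply/ffunP => x; rewrite !ffunE;
  by case: (x \in A).
transitivity (\sum_(p : Om * Om) F p.1 * G p.1).
  rewrite -(pair_bigA _ (fun f g => F f * G f)) /=.
  rewrite mulr_sumr; apply: eq_bigr => f _.
  by rewrite sumr_const card_ffun mulr_natl.
by rewrite (reindex_inj (inv_inj sgK)).
Qed.
Lemma prod_indep (S : {set {set T}}) (g : {set T} -> Om -> R) :
  (forall e e', e \in S -> e' \in S -> e != e' -> [disjoint e & e']) ->
  (forall e (f f' : Om), e \in S -> {in e, f =1 f'} -> g e f = g e f') ->
  \sum_f \prod_(e in S) g e f =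
    #|Om|%:R * \prod_(e in S) ((\sum_f g e f) / #|Om|%:R).
Proof.
have [N0|NZ] := eqVneq (#|Om|%:R : R) 0.
  have c0 : #|Om| = 0%N by apply/eqP; rewrite -(@pnatr_eq0 R); apply/eqP.
  move=> _ _; rewrite N0 mul0r big_pred0 // => f.
  by have := card0_eq c0 f.
have [n ltSn] := ubnP #|S|; elim: n S ltSn => // n IH S ltSn HS Hg.
have [->|[e eS]] := set_0Vmem S.
  rewrite big_set0 mulr1; under eq_bigr do rewrite big_set0.
  by rewrite sumr_const card_ffun.
apply: (mulfI NZ).
rewrite (eq_bigr (fun f => g e f * \prod_(e' in S :\ e) g e' f)); last first.
  by move=> f _; rewrite (big_setD1 e eS).
rewrite (big_setD1 e eS) /=.
rewrite (@mix_sum e); last first.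
- move=> f f' ff'; apply: eq_bigr => e' /setD1P [e'e e'S].
  apply: Hg => // x xe'; apply: ff'; rewrite inE.
  by rewrite (disjointFr (HS e' e e'S eS e'e) xe').
- by move=> f f' ff'; apply: Hg.
have ltS : (#|S :\ e| < n)%N.
  by move: ltSn; rewrite (cardsD1 e S) eS add1n ltnS.
have HS' : forall e1 e2, e1 \in S :\ e -> e2 \in S :\ e -> e1 != e2 -> [disjoint e1 & e2].
  by move=> e1 e2 /setD1P[_ h1] /setD1P[_ h2]; apply: HS.
have Hg' : forall e1 (f f' : Om), e1 \in S :\ e -> {in e1, f =1 f'} -> g e1 f = g e1 f'.
  by move=> e1 f f' /setD1P[_ h1]; apply: Hg.
rewrite (IH _ ltS HS' Hg').
by rewrite mulrCA; congr (_ * _); rewrite mulrA (mulrC #|Om|%:R) divfK.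
Qed.
Lemma mean_prod (h : T -> J -> R) : (0 < #|J|)%N ->
  \sum_(f : Om) \prod_x h x (f x) =
    #|Om|%:R * \prod_x ((\sum_j h x j) / #|J|%:R).
Proof.
move=> J0; rewrite -bigA_distr_bigA.
have -> : (#|Om|%:R : R) = \prod_(x : T) (#|J|%:R : R).
  by rewrite prodr_const card_ffun natrX.
rewrite -big_split /=; apply: eq_bigr => x _.
by rewrite mulrC divfK // pnatr_eq0 -lt0n.
Qed.

Lemma count_forall (e : {set T}) (t : T -> J) : (0 < #|J|)%N ->
  \sum_(f : Om) ([forall x in e, f x == t x] : bool)%:R =
    #|Om|%:R * (#|J|%:R^-1) ^+ #|e| :> R.
Proof.
move=> J0.
pose h x j : R := if x \in e then (j == t x)%:R else 1.
transitivity (\sum_(f : Om) \prod_x h x (f x)).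
  apply: eq_bigr => f _.
  case: (boolP [forall x in e, f x == t x]) => [/forall_inP H | /forall_inPn [x xe fx]].
    rewrite big1 // => x _; rewrite /h; case: ifP => // xe.
    by rewrite (eqP (H x xe)) eqxx.
  by rewrite (bigD1 x) //= /h xe (negbTE fx) mul0r.
rewrite mean_prod //; congr (_ * _).
transitivity (\prod_x (if x \in e then #|J|%:R^-1 else 1 : R)).
  apply: eq_bigr => x _; rewrite /h; case: ifP => xe.
    rewrite (bigD1 (t x)) //= eqxx big1 ?addr0 ?div1r // => j /negbTE ->.
    by [].
  by rewrite sumr_const divff // pnatr_eq0 -lt0n.
by rewrite -big_mkcond /= prodr_const.
Qed.

Lemma tail_bound (S : {set {set T}}) (t : {set T} -> T -> J) :
  (0 < #|J|)%N ->
  (forall e e', e \in S -> e' \in S -> e != e' -> [disjoint e & e']) ->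
  (forall e, e \in S -> #|e| = 2) ->
  #|[set f : Om | #|[set e in S | [forall x in e, f x == t e x]]|%:R
       < #|S|%:R / ((#|J|%:R : R) ^+ 2 + 1)]|%:R
  <= #|Om|%:R * expR (- (#|S|%:R / (2 * (#|J|%:R : R) ^+ 2 * ((#|J|%:R : R) ^+ 2 + 1) ^+ 2))).
Proof.
move=> J0 HS H2.
set rho : R := (#|J|%:R : R) ^+ 2.
have r1 : 1 <= rho by rewrite /rho exprn_ege1 // ler1n.
set d := (rho + 1)^-1; set q := expR (- d).
set m := #|S|.
pose keep (f : Om) (e : {set T}) := [forall x in e, f x == t e x].
have d0 : 0 < d by rewrite invr_gt0; lra.
apply: le_trans (_ : expR (m%:R * d * d) * \sum_(f : Om) q ^+ #|[set e in S | keep f e]| <= _).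
  rewrite -sum1_card natr_sum big_mkcond /= mulr_sumr.
  apply: ler_sum => f _; rewrite inE; case: ifP => [hB|_]; last first.
    by rewrite mulr_ge0 ?exprn_ge0 ?expR_ge0.
  rewrite /q -expRM_natl -expRD; apply: ltW; rewrite expR_gt1.
  have : #|[set e in S | keep f e]|%:R * d < m%:R * d * d.
    by rewrite ltr_pM2r.
  lra.
have -> : \sum_(f : Om) q ^+ #|[set e in S | keep f e]| =
          \sum_(f : Om) \prod_(e in S) (if keep f e then q else 1).
  apply: eq_bigr => f _.
  rewrite -big_mkcondr /= -prodr_const; apply: eq_bigl => e; rewrite inE.
  by [].
rewrite prod_indep //; last first.
  move=> e f f' eS ff'; rewrite /keep.
  suff -> : [forall x in e, f x == t e x] = [forall x in e, f' x == t e x] by [].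
  by apply: eq_forallb_in => x xe; rewrite ff'.
have NZ : (#|Om|%:R : R) != 0.
  by rewrite pnatr_eq0 card_ffun expn_eq0 negb_and -lt0n J0.
have -> : \prod_(e in S) ((\sum_(f : Om) (if keep f e then q else 1)) / #|Om|%:R)
        = \prod_(e in S) (1 + (q - 1) / rho).
  apply: eq_bigr => e eS.
  have -> : \sum_(f : Om) (if keep f e then q else 1) =
            \sum_(f : Om) (1 + (q - 1) * (keep f e)%:R).
    by apply: eq_bigr => f _; case: (keep f e); rewrite ?mulr1 ?mulr0 ?addr0 //; ring.
  rewrite big_split /= -mulr_sumr count_forall // H2 // sumr_const card_ffun.
  rewrite -(card_ffun T J) /rho.
  field.
  rewrite NZ pnatr_eq0 -lt0n J0 /=.
  by [].
rewrite prodr_const -/m.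
rewrite mulrCA; apply: ler_wpM2l; first by [].
exact: real_bound.
Qed.
End Indep.

Theorem lemma4p2 (R : realType) (T : finType) (k r : nat)
    (M : 'I_k -> {set {set T}}) :
  (forall i, is_matching (M i)) ->
  max_deg_le (\bigcup_(i < k) M i) r ->
  (forall i, 2 * ((r ^ 3 + r)%N%:R) ^+ 2 * ln (k%:R : R) < #|M i|%:R) ->
  exists H : {set {set T}},
    [/\ is_matching H, H \subset \bigcup_(i < k) M i &
        forall i, #|M i|%:R / ((r ^ 2 + 1)%N%:R) <= (#|H :&: M i|%:R : R)].
Proof.
move=> HM Hdeg Hsz.
case: k M HM Hdeg Hsz => [|k] M HM Hdeg Hsz.
  exists [set e : {set T} | false]; split => //; last by case.
    by split=> [e|e f]; rewrite inE.
  by apply/fintype.subsetP => e; rewrite inE.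
set E := \bigcup_(i < k.+1) M i.
have ME : forall i e, e \in M i -> e \in E.
  by move=> i e h; apply/bigcupP; exists i.
have E2 : forall e, e \in E -> #|e| = 2%N.
  by move=> e /bigcupP [i _ h]; exact: (HM i).1 e h.
have r0 : (0 < r)%N.
  have h := Hsz ord0.
  have lnk : 0 <= ln (k.+1%:R : R) by apply: ln_ge0; rewrite ler1n.
  have : (0 < #|M ord0|)%N.
    rewrite -(ltr0n R); apply: le_lt_trans h.
    by rewrite mulr_ge0 // mulr_ge0 // sqr_ge0.
  case/card_gt0P => e eM.
  have : (0 < #|e|)%N by rewrite (E2 e (ME _ _ eM)).
  case/card_gt0P => x xe.
  apply: leq_trans (Hdeg x); rewrite /deg.
  by apply/card_gt0P; exists e; rewrite inE (ME _ _ eM) xe.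
case: r r0 Hdeg Hsz => // r' _ Hdeg Hsz.
pose J := 'I_r'.+1.
pose Nb x := [set e in E | x \in e].
pose idx x e := index e (enum (Nb x)).
pose t (e : {set T}) (x : T) : J := inord (idx x e).
pose keep (f : {ffun T -> J}) (e : {set T}) := [forall x in e, f x == t e x].
pose Hf f := [set e in E | keep f e].
have idx_lt : forall x e, e \in E -> x \in e -> (idx x e < r'.+1)%N.
  move=> x e eE xe; apply: leq_trans (Hdeg x).
  rewrite /deg -/(Nb x) cardE /idx index_mem mem_enum inE eE xe.
  by [].
have Hmatch : forall f, is_matching (Hf f).
  move=> f; split.
    by move=> e; rewrite inE => /andP[eE _]; exact: E2.
  move=> e e'; rewrite !inE => /andP[eE ke] /andP[e'E ke'] ne.
  rewrite disjoint_subset; apply/fintype.subsetP => x xe; rewrite inE; apply/negP => xe'.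
  move/negP: ne; apply; apply/eqP.
  have h1 := eqP (forall_inP ke x xe).
  have h2 := eqP (forall_inP ke' x xe').
  have hi : idx x e = idx x e'.
    have := congr1 (@nat_of_ord _) (etrans (esym h1) h2).
    by rewrite /t !inordK ?idx_lt.
  have eN : e \in enum (Nb x) by rewrite mem_enum inE eE xe.
  have e'N : e' \in enum (Nb x) by rewrite mem_enum inE e'E xe'.
  by rewrite -[LHS](nth_index e eN) -[RHS](nth_index e e'N) -/(idx x e) -/(idx x e') hi.
have Hsub : forall f, Hf f \subset E.
  by move=> f; apply/fintype.subsetP => e; rewrite inE => /andP[].
have HS : forall i e e', e \in M i -> e' \in M i -> e != e' -> [disjoint e & e'].
  by move=> i; exact: (HM i).2.
have cJ : #|J| = r'.+1 := card_ord _.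
have J0 : (0 < #|J|)%N by rewrite cJ.
pose N : R := #|{ffun T -> J}|%:R.
have N0 : 0 < N by rewrite ltr0n card_ffun expn_gt0 J0.
have castr : ((r'.+1 ^ 2 + 1)%N%:R : R) = (#|J|%:R : R) ^+ 2 + 1.
  by rewrite cJ natrD natrX.
pose Bad i := [set f : {ffun T -> J} | #|[set e in M i | keep f e]|%:R
     < #|M i|%:R / ((#|J|%:R : R) ^+ 2 + 1)].
have Hbad : forall i, #|Bad i|%:R < N / k.+1%:R.
  move=> i.
  apply: le_lt_trans (@tail_bound R T J (M i) t J0 (HS i) (fun e h => E2 e (ME i e h))) _.
  rewrite ltr_pM2l //.
  have := Hsz i.
  have -> : ((r'.+1 ^ 3 + r'.+1)%N%:R : R) ^+ 2 =
      (#|J|%:R : R) ^+ 2 * ((#|J|%:R : R) ^+ 2 + 1) ^+ 2.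
    by rewrite cJ natrD !natrX; ring.
  move=> hz.
  have kpos : (k.+1%:R : R) \is Num.pos by rewrite posrE.
  rewrite -(lnK kpos) -expRN ltr_expR ltrN2.
  rewrite ltr_pdivlMr; last first.
    have A0 : 0 < (#|J|%:R : R) ^+ 2 by rewrite exprn_gt0 // ltr0n.
    have B0 : 0 < ((#|J|%:R : R) ^+ 2 + 1) ^+ 2 by apply: exprn_gt0; lra.
    by rewrite mulr_gt0 // mulr_gt0.
  move: hz; set L := ln _; set A := (#|J|%:R : R) ^+ 2; nra.
case: (boolP [exists f : {ffun T -> J}, [forall i : 'I_k.+1, f \notin Bad i]]).
  case/existsP => f /forallP Hf0.
  exists (Hf f); split => // i.
  rewrite castr.
  have -> : Hf f :&: M i = [set e in M i | keep f e].
    apply/setP => e; rewrite !inE.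
    by case eM: (e \in M i); rewrite ?andbF ?andbT // (ME i e eM).
  by have := Hf0 i; rewrite inE -leNgt.
move/existsPn => none.
exfalso.
have le1 : N <= \sum_(i < k.+1) #|Bad i|%:R.
  rewrite /N -sum1_card natr_sum.
  under [X in _ <= X]eq_bigr => i _ do rewrite -sum1_card natr_sum big_mkcond /=.
  rewrite exchange_big /=.
  rewrite [X in X <= _]big_mkcond /=.
  apply: ler_sum => f _.
  have := none f; move/forallPn => [i]; rewrite negbK => hi.
  rewrite (bigD1 i) //= hi lerDl.
  by apply: sumr_ge0 => j _; case: ifP.
have lt2 : \sum_(i < k.+1) #|Bad i|%:R < N.
  apply: (lt_le_trans (ltr_sum _ (fun i _ => Hbad i))).
    by apply/hasP; exists ord0; rewrite ?mem_index_enum.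
  by rewrite sumr_const card_ord -[N / _ *+ _]mulr_natr divfK ?pnatr_eq0.
by have := le_lt_trans le1 lt2; rewrite ltxx.
Qed.
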